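(* Let $\mathbb F$ be a field, $\mathcal A$ a commutative $\mathbb F$-algebra, $\Theta,\Sigma$ square matrices of order $m$ with entries in $\mathcal A$, and $\Xi=\mathrm{diag}(a_1,\dots,a_m)$ with $a_1,\dots,a_m\in\mathbb F$ pairwise distinct. Suppose $\Theta\Sigma=\Sigma\Xi$ and that every column of $\Sigma$ contains at least one entry which is a unit of $\mathcal A$. Then $\det\Sigma$ is a unit in $\mathcal A$. *)

(* Defs.v *)
From mathcomp Require Import all_boot all_algebra.
Set Implicit Arguments. Unset Strict Implicit. Unset Printing Implicit Defensive.

(* Main.v *)
Require Import Defs.
From mathcomp Require Import all_boot all_algebra.
Import GRing.Theory.
Local Open Scope ring_scope.

Lemma prodA (F : fieldType) (A : comUnitAlgType F) (I : Type) (r : seq I)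
  (P : pred I) (f : I -> F) :
  (\prod_(i <- r | P i) f i)%:A = \prod_(i <- r | P i) ((f i)%:A : A).
Proof.
elim: r => [|x r IH]; first by rewrite !big_nil scale1r.
rewrite !big_cons; case: (P x) => //.
by rewrite -IH -scalerAl mul1r scalerA.
Qed.

Theorem mainTheorem8 (F : fieldType) (A : comUnitAlgType F) (m : nat)
    (Theta Sigma : 'M[A]_m) (a : 'I_m -> F)
    (a_inj : injective a)
    (hcomm : Theta *m Sigma = Sigma *m diag_mx (\row_i (a i)%:A))
    (hcol : forall j : 'I_m, exists i : 'I_m, Sigma i j \is a GRing.unit) :
  \det Sigma \is a GRing.unit.
Proof.
pose R (P : 'M[A]_m) (f : 'I_m -> A) := P *m Sigma = Sigma *m diag_mx (\row_i f i).
have Rstep : forall c : A, R (Theta - c%:M) (fun i => (a i)%:A - c).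
  move=> c; rewrite /R mulmxBl hcomm mul_scalar_mx !mul_mx_diag.
  by apply/matrixP => i j; rewrite !mxE mulrBr (mulrC c).
have Rmul : forall P1 f1 P2 f2, R P1 f1 -> R P2 f2 ->
    R (P1 * P2) (fun i => f1 i * f2 i).
  move=> P1 f1 P2 f2 h1 h2; rewrite /R -mulmxA h2 mulmxA h1 -mulmxA mulmx_diag.
  by rewrite !mul_mx_diag; apply/matrixP => i l; rewrite !mxE.
pose P j := \prod_(k | k != j) (Theta - ((a k)%:A)%:M).
pose g j := \big[(fun f1 f2 i => f1 i * f2 i)/(fun _ => 1)]_(k | k != j)
              (fun i => (a i)%:A - (a k)%:A : A).
have RP : forall j, R (P j) (g j).
  move=> j; apply: big_ind2 => //.
  by rewrite /R mul1mx; apply/matrixP => i l; rewrite mul_mx_diag !mxE mulr1.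
have gE : forall j i, g j i = \prod_(k | k != j) ((a i)%:A - (a k)%:A).
  move=> j i; rewrite /g.
  by apply: (big_morph (fun f : 'I_m -> A => f i)).
have g0 : forall j i, i != j -> g j i = 0.
  move=> j i hij; rewrite gE (bigD1 i) //= subrr mul0r //.
have gU : forall j, g j j \is a GRing.unit.
  move=> j; rewrite gE.
  have -> : \prod_(k | k != j) ((a j)%:A - (a k)%:A) =
            (\prod_(k | k != j) (a j - a k))%:A :> A.
    rewrite (prodA F A).
    by apply: eq_bigr => k _; rewrite /= scalerBl.
  have hnz : \prod_(k | k != j) (a j - a k) != 0.
    rewrite prodf_seq_neq0; apply/allP => k _; apply/implyP => hk.
    by rewrite subr_eq0; apply/eqP => /a_inj /eqP; rewrite eq_sym (negbTE hk).
  apply/unitrP; exists ((\prod_(k | k != j) (a j - a k))^-1)%:A.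
  by split; rewrite -scalerAl mul1r scalerA ?mulVf ?mulfV // scale1r.
pose ii j := odflt j [pick i | Sigma i j \is a GRing.unit].
have iiU : forall j, Sigma (ii j) j \is a GRing.unit.
  move=> j; rewrite /ii; case: pickP => [i //|h].
  by have [i hi] := hcol j; move: (h i); rewrite hi.
pose B := \matrix_(j, l) ((Sigma (ii j) j * g j j)^-1 * P j (ii j) l).
have hB : B *m Sigma = 1%:M.
  apply/matrixP => j k; rewrite !mxE.
  under eq_bigr do rewrite mxE -mulrA.
  rewrite -mulr_sumr.
  have -> : \sum_l P j (ii j) l * Sigma l k = (P j *m Sigma) (ii j) k.
    by rewrite mxE.
  rewrite RP mul_mx_diag !mxE.
  have [->|hkj] := eqVneq k j.
    by rewrite mulVr // unitrM iiU gU.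
  by rewrite (g0 _ _ hkj) !mulr0.
have [_ hS] := mulmx1_unit hB.
by rewrite -unitmxE.
Qed.
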